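(* Suppose there exist an $(N_1,N_2,N_3)$-achievable $(n_1,n_2,n_3,k_1,k_2,T)_{\mathbb{F}}$ streaming code and an $(N_1,N_2,N_3)$-achievable $(n_1',n_2',n_3',k_1',k_2',T)_{\mathbb{F}}$ streaming code. Then for all nonnegative integers $A,B$ there exists an $(N_1,N_2,N_3)$-achievable $(An_1+Bn_1',\,An_2+Bn_2',\,An_3+Bn_3',\,Ak_1+Bk_1',\,Ak_2+Bk_2',\,T)_{\mathbb{F}}$ streaming code.
   Context: Network: two sources, one relay, one destination; no direct source–destination link. Source $i\in\{1,2\}$ has messages $s_{t,i}\in\mathbb{F}^{k_i}$, $t\ge0$, over a finite field $\mathbb{F}$. A time-invariant $(n_1,n_2,n_3,k_1,k_2,T)_{\mathbb{F}}$ streaming code (unbounded memory): source $i$ sends at time $t$ a packet $x^{(1)}_{t,i}\in\mathbb{F}^{n_i}$, a fixed function of $s_{0,i},\dots,s_{t,i}$; a relay function $g$, the same at every time $t$, takes the packets received from both sources at times $t-T,\dots,t$ together with the relay's previously produced estimates of past source messages, and outputs a packet $x^{(2)}_t\in\mathbb{F}^{n_3}$ and estimates of $s_{t-T,1},s_{t-T,2}$; the destination outputs at time $t+T$ estimates $\hat s_{t,i}$ from its received packets up to time $t+T$. Each link is a packet erasure channel (received packet is the sent one or the erasure symbol $*$). An $N$-erasure sequence has exactly $N$ erased times; link source $i\to$relay suffers an arbitrary $N_i$-erasure sequence, relay$\to$destination an arbitrary $N_3$-erasure sequence. The code is $(N_1,N_2,N_3)$-achievable if $\hat s_{t,i}=s_{t,i}$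 always. *)

(* Defs.v *)
From HB Require Import structures.
From mathcomp Require Import all_boot all_algebra all_field.
Set Implicit Arguments. Unset Strict Implicit. Unset Printing Implicit Defensive.

Definition erasure_seq (N : nat) (e : nat -> bool) : Prop :=
  exists s : seq nat, [/\ uniq s, size s = N & forall t, e t = (t \in s)].

(* Output of a packet erasure channel: None plays the role of the erasure symbol *. *)
Definition chan (X : Type) (e : nat -> bool) (x : nat -> X) : nat -> option X :=
  fun t => if e t then None else Some (x t).

(* Values at the times max(0, t-T), ..., t (in increasing order). *)
Definition window (X : Type) (T t : nat) (y : nat -> X) : seq X :=
  map y (iota (t - T) (t - (t - T)).+1).

Record stream_code (F : finFieldType) (n1 n2 n3 k1 k2 T : nat) := StreamCode {
  (* source i encoder: packet at time t from [:: s_0,i; ...; s_t,i] *)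
  enc1 : seq 'rV[F]_k1 -> 'rV[F]_n1;
  enc2 : seq 'rV[F]_k2 -> 'rV[F]_n2;
  (* time-invariant relay function: received packets from source 1 and 2 at
     times t-T..t, and the relay's previously produced estimates of
     (s_0,1,s_0,2), ..., (s_(t-T-1),1, s_(t-T-1),2); outputs the relay packet
     at time t and estimates of (s_(t-T),1, s_(t-T),2). *)
  relay : seq (option 'rV[F]_n1) -> seq (option 'rV[F]_n2) ->
          seq ('rV[F]_k1 * 'rV[F]_k2) -> 'rV[F]_n3 * ('rV[F]_k1 * 'rV[F]_k2);
  (* destination: estimate of (s_t,1, s_t,2) from received packets at times 0..t+T *)
  dec : seq (option 'rV[F]_n3) -> 'rV[F]_k1 * 'rV[F]_k2
}.

Section Run.
Variables (F : finFieldType) (n1 n2 n3 k1 k2 T : nat).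
Variable C : stream_code F n1 n2 n3 k1 k2 T.
Variables (s1 : nat -> 'rV[F]_k1) (s2 : nat -> 'rV[F]_k2).
Variables (e1 e2 e3 : nat -> bool).

Definition src_pkt1 (t : nat) : 'rV[F]_n1 := enc1 C (map s1 (iota 0 t.+1)).
Definition src_pkt2 (t : nat) : 'rV[F]_n2 := enc2 C (map s2 (iota 0 t.+1)).

Definition rcv1 : nat -> option 'rV[F]_n1 := chan e1 src_pkt1.
Definition rcv2 : nat -> option 'rV[F]_n2 := chan e2 src_pkt2.

Definition relay_out (t : nat) (h : seq ('rV[F]_k1 * 'rV[F]_k2)) :=
  relay C (window T t rcv1) (window T t rcv2) h.

(* relay_hist m = the relay's estimates of the messages at times 0..m-1
   (the estimate of time-j messages is produced at time j+T) *)
Fixpoint relay_hist (m : nat) : seq ('rV[F]_k1 * 'rV[F]_k2) :=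
  match m with
  | 0 => [::]
  | m'.+1 => let h := relay_hist m' in rcons h (relay_out (m' + T) h).2
  end.

Definition relay_pkt (t : nat) : 'rV[F]_n3 := (relay_out t (relay_hist (t - T))).1.

Definition rcv3 : nat -> option 'rV[F]_n3 := chan e3 relay_pkt.

Definition dest_est (t : nat) : 'rV[F]_k1 * 'rV[F]_k2 :=
  dec C (map rcv3 (iota 0 (t + T).+1)).

End Run.

Definition achievable (F : finFieldType) (n1 n2 n3 k1 k2 T : nat)
    (N1 N2 N3 : nat) (C : stream_code F n1 n2 n3 k1 k2 T) : Prop :=
  forall (s1 : nat -> 'rV[F]_k1) (s2 : nat -> 'rV[F]_k2) (e1 e2 e3 : nat -> bool),
    erasure_seq N1 e1 -> erasure_seq N2 e2 -> erasure_seq N3 e3 ->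
    forall t, dest_est C s1 s2 e1 e2 e3 t = (s1 t, s2 t).

(* Main.v *)
Require Import Defs.
From mathcomp Require Import all_boot all_algebra all_field.
Set Implicit Arguments. Unset Strict Implicit. Unset Printing Implicit Defensive.
Import GRing.Theory.
Local Open Scope ring_scope.

Definition P (F : finFieldType) (n1 n2 n3 k1 k2 T N1 N2 N3 : nat) : Prop :=
  exists C : stream_code F n1 n2 n3 k1 k2 T, achievable N1 N2 N3 C.

Definition zcode (F : finFieldType) T : stream_code F 0 0 0 0 0 T :=
  @StreamCode F 0 0 0 0 0 T (fun _ => 0) (fun _ => 0) (fun _ _ _ => (0, (0, 0))) (fun _ => (0, 0)).

Lemma zeroP F T N1 N2 N3 : P F 0 0 0 0 0 T N1 N2 N3.
Proof.
exists (zcode F T) => s1 s2 e1 e2 e3 _ _ _ t.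
by rewrite /dest_est /=; congr pair; apply/rowP => -[].
Qed.

Definition pl {F : finFieldType} {k1 k2 k1' k2'}
  (p : 'rV[F]_(k1 + k1') * 'rV[F]_(k2 + k2')) := (lsubmx p.1, lsubmx p.2).
Definition pr {F : finFieldType} {k1 k2 k1' k2'}
  (p : 'rV[F]_(k1 + k1') * 'rV[F]_(k2 + k2')) := (rsubmx p.1, rsubmx p.2).

Definition scode (F : finFieldType) n1 n2 n3 k1 k2 n1' n2' n3' k1' k2' T
  (C : stream_code F n1 n2 n3 k1 k2 T) (C' : stream_code F n1' n2' n3' k1' k2' T) :
  stream_code F (n1 + n1') (n2 + n2') (n3 + n3') (k1 + k1') (k2 + k2') T :=
  @StreamCode F (n1 + n1') (n2 + n2') (n3 + n3') (k1 + k1') (k2 + k2') T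
    (fun xs => row_mx (enc1 C (map lsubmx xs)) (enc1 C' (map rsubmx xs)))
    (fun xs => row_mx (enc2 C (map lsubmx xs)) (enc2 C' (map rsubmx xs)))
    (fun w1 w2 h =>
       let r := relay C (map (omap lsubmx) w1) (map (omap lsubmx) w2) (map pl h) in
       let r' := relay C' (map (omap rsubmx) w1) (map (omap rsubmx) w2) (map pr h) in
       (row_mx r.1 r'.1, (row_mx r.2.1 r'.2.1, row_mx r.2.2 r'.2.2)))
    (fun ys => let d := dec C (map (omap lsubmx) ys) in
               let d' := dec C' (map (omap rsubmx) ys) in
               (row_mx d.1 d'.1, row_mx d.2 d'.2)).

Lemma histS F n1 n2 n3 k1 k2 T (C : stream_code F n1 n2 n3 k1 k2 T) s1 s2 e1 e2 m :
  relay_hist C s1 s2 e1 e2 m.+1 =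
  rcons (relay_hist C s1 s2 e1 e2 m) (relay_out C s1 s2 e1 e2 (m + T) (relay_hist C s1 s2 e1 e2 m)).2.
Proof. by []. Qed.

Lemma sumP F n1 n2 n3 k1 k2 n1' n2' n3' k1' k2' T N1 N2 N3 :
  P F n1 n2 n3 k1 k2 T N1 N2 N3 -> P F n1' n2' n3' k1' k2' T N1 N2 N3 ->
  P F (n1 + n1') (n2 + n2') (n3 + n3') (k1 + k1') (k2 + k2') T N1 N2 N3.
Proof.
move=> [C HC] [C' HC']; exists (scode C C') => s1 s2 e1 e2 e3 E1 E2 E3 t.
set C2 := scode C C'.
pose s1L t := lsubmx (s1 t). pose s1R t := rsubmx (s1 t).
pose s2L t := lsubmx (s2 t). pose s2R t := rsubmx (s2 t).
have relE : forall w1 w2 h, relay C2 w1 w2 h =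
  (row_mx (relay C (map (omap lsubmx) w1) (map (omap lsubmx) w2) (map pl h)).1
          (relay C' (map (omap rsubmx) w1) (map (omap rsubmx) w2) (map pr h)).1,
   (row_mx (relay C (map (omap lsubmx) w1) (map (omap lsubmx) w2) (map pl h)).2.1
          (relay C' (map (omap rsubmx) w1) (map (omap rsubmx) w2) (map pr h)).2.1,
    row_mx (relay C (map (omap lsubmx) w1) (map (omap lsubmx) w2) (map pl h)).2.2
          (relay C' (map (omap rsubmx) w1) (map (omap rsubmx) w2) (map pr h)).2.2)).
  by [].
have r1L : forall u, omap lsubmx (rcv1 C2 s1 e1 u) = rcv1 C s1L e1 u.
  move=> u; rewrite /rcv1 /chan; case: (e1 u) => //=.
  by rewrite /src_pkt1 /= row_mxKl -map_comp.
have r1R : forall u, omap rsubmx (rcv1 C2 s1 e1 u) = rcv1 C' s1R e1 u.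
  move=> u; rewrite /rcv1 /chan; case: (e1 u) => //=.
  by rewrite /src_pkt1 /= row_mxKr -map_comp.
have r2L : forall u, omap lsubmx (rcv2 C2 s2 e2 u) = rcv2 C s2L e2 u.
  move=> u; rewrite /rcv2 /chan; case: (e2 u) => //=.
  by rewrite /src_pkt2 /= row_mxKl -map_comp.
have r2R : forall u, omap rsubmx (rcv2 C2 s2 e2 u) = rcv2 C' s2R e2 u.
  move=> u; rewrite /rcv2 /chan; case: (e2 u) => //=.
  by rewrite /src_pkt2 /= row_mxKr -map_comp.
have wL1 : forall u, map (omap lsubmx) (window T u (rcv1 C2 s1 e1)) = window T u (rcv1 C s1L e1).
  by move=> u; rewrite /window -map_comp; apply: eq_map => v /=; rewrite r1L.
have wR1 : forall u, map (omap rsubmx) (window T u (rcv1 C2 s1 e1)) = window T u (rcv1 C' s1R e1).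
  by move=> u; rewrite /window -map_comp; apply: eq_map => v /=; rewrite r1R.
have wL2 : forall u, map (omap lsubmx) (window T u (rcv2 C2 s2 e2)) = window T u (rcv2 C s2L e2).
  by move=> u; rewrite /window -map_comp; apply: eq_map => v /=; rewrite r2L.
have wR2 : forall u, map (omap rsubmx) (window T u (rcv2 C2 s2 e2)) = window T u (rcv2 C' s2R e2).
  by move=> u; rewrite /window -map_comp; apply: eq_map => v /=; rewrite r2R.
have hL : forall m, map pl (relay_hist C2 s1 s2 e1 e2 m) = relay_hist C s1L s2L e1 e2 m.
  elim=> [//|m IH]; rewrite histS map_rcons IH /relay_out relE; cbn [fst snd].
  rewrite wL1 wL2 IH /pl; cbn [fst snd].
  by rewrite !row_mxKl -!surjective_pairing.
have hR : forall m, map pr (relay_hist C2 s1 s2 e1 e2 m) = relay_hist C' s1R s2R e1 e2 m.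
  elim=> [//|m IH]; rewrite histS map_rcons IH /relay_out relE; cbn [fst snd].
  rewrite wR1 wR2 IH /pr; cbn [fst snd].
  by rewrite !row_mxKr -!surjective_pairing.
have r3L : forall u, omap lsubmx (rcv3 C2 s1 s2 e1 e2 e3 u) = rcv3 C s1L s2L e1 e2 e3 u.
  move=> u; rewrite /rcv3 /chan; case: (e3 u) => //=.
  rewrite /relay_pkt /relay_out relE; cbn [fst snd].
  by rewrite row_mxKl wL1 wL2 hL.
have r3R : forall u, omap rsubmx (rcv3 C2 s1 s2 e1 e2 e3 u) = rcv3 C' s1R s2R e1 e2 e3 u.
  move=> u; rewrite /rcv3 /chan; case: (e3 u) => //=.
  rewrite /relay_pkt /relay_out relE; cbn [fst snd].
  by rewrite row_mxKr wR1 wR2 hR.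
rewrite /dest_est /= -!map_comp.
rewrite (eq_map (g := rcv3 C s1L s2L e1 e2 e3)); last by move=> u /=; rewrite r3L.
rewrite (eq_map (g := rcv3 C' s1R s2R e1 e2 e3)); last by move=> u /=; rewrite r3R.
rewrite r3L r3R.
have := HC s1L s2L e1 e2 e3 E1 E2 E3 t; rewrite /dest_est => ->.
have := HC' s1R s2R e1 e2 e3 E1 E2 E3 t; rewrite /dest_est => ->.
by rewrite /= /s1L /s1R /s2L /s2R !hsubmxK.
Qed.

Lemma multP F n1 n2 n3 k1 k2 T N1 N2 N3 A :
  P F n1 n2 n3 k1 k2 T N1 N2 N3 ->
  P F (A * n1) (A * n2) (A * n3) (A * k1) (A * k2) T N1 N2 N3.
Proof.
move=> H; elim: A => [|A IH]; first by rewrite !mul0n; apply: zeroP.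
by rewrite !mulSn; apply: sumP.
Qed.

Theorem lemma6 (F : finFieldType) (n1 n2 n3 k1 k2 n1' n2' n3' k1' k2' T : nat)
    (N1 N2 N3 : nat) :
  (exists C : stream_code F n1 n2 n3 k1 k2 T, achievable N1 N2 N3 C) ->
  (exists C' : stream_code F n1' n2' n3' k1' k2' T, achievable N1 N2 N3 C') ->
  forall A B : nat,
    exists C'' : stream_code F (A * n1 + B * n1') (A * n2 + B * n2')
                   (A * n3 + B * n3') (A * k1 + B * k1') (A * k2 + B * k2') T,
      achievable N1 N2 N3 C''.
Proof.
move=> H H' A B.
exact: (sumP (multP A H) (multP B H')).
Qed.
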